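(* Let $\Pi=(\mathsf A,\mathsf B)$ be a protocol. Then for every $c\in(0,\frac12]$ there exists $z=z(c,\Pi)\in\mathbb N$ such that either (1) $\mathbb E_{L_\Pi}[C^{\mathsf A,z}_\Pi]\ge c(1-2c)$ and $\sum_{j=0}^{z-1}\beta_j<c$; or (2) $\mathbb E_{L_\Pi}[C^{\mathsf B,z}_\Pi]\ge c(1-2c)$ and $\sum_{j=0}^{z}\alpha_j<c$, where $\alpha_j=1-\mathrm{Best}_{\mathsf B}(\Pi_{(\mathsf A,j)})$ and $\beta_j=1-\mathrm{Best}_{\mathsf A}(\Pi_{(\mathsf B,j)})$.
   Context: Protocols are $m$-round single-bit-message protocols identified with the complete binary tree of height $m$, with control scheme, edge probabilities $e_\Pi(u,ub)$, output $\chi_\Pi:\text{leaves}\to\{0,1\}$, visit probabilities $v_\Pi(u)$, leaf distribution $L_\Pi$; $\Pi_u$ is the subprotocol under $u$ (or $\perp$ if $v_\Pi(u)=0$); expectations over $L_\perp$ are $0$; $\mathbb E_{L_{\Pi_u}}[M]$ is the expectation of $M$ restricted to leaves under $u$. $\mathsf A$-dominated measure $M^{\mathsf A}_\Pi$: for a 0-round protocol with leaf $\ell$, $M^{\mathsf A}_\Pi(\ell)=\chi_\Pi(\ell)$; otherwise for a leaf with first bit $b$, with $\mu_c=\mathbb E_{L_{\Pi_c}}[M^{\mathsf A}_{\Pi_c}]$: value $0$ if $e_\Pi(\lambda,b)=0$; $M^{\mathsf A}_{\Pi_b}(\ell)$ if $e_\Pi(\lambda,b)=1$, or if $e_\Pi(\lambda,b)\in(0,1)$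 and ($\mathsf A$ controls the root or $\mu_b\le\mu_{1-b}$); $\frac{\mu_{1-b}}{\mu_b}M^{\mathsf A}_{\Pi_b}(\ell)$ otherwise. $M^{\mathsf B}_\Pi$ is defined identically with $\mathsf A,\mathsf B$ exchanged and base case $1-\chi_\Pi(\ell)$; $M^{\mathsf A}_\perp,M^{\mathsf B}_\perp$ are zero. Conditional protocol: for $\mathbb E_{L_\Pi}[M]<1$, $\Pi|_M$ keeps control and output and has $e_{\Pi|_M}(u,ub)=0$ if $\mathbb E_{L_{\Pi_u}}[M]=1$, else $e_\Pi(u,ub)\frac{1-\mathbb E_{L_{\Pi_{ub}}}[M]}{1-\mathbb E_{L_{\Pi_u}}[M]}$; $\Pi|_M=\perp$ if $\mathbb E_{L_\Pi}[M]=1$ or $\Pi=\perp$. Sequence: $\Pi_{(\mathsf A,0)}=\Pi$, $\Pi_{(\mathsf B,j)}=\Pi_{(\mathsf A,j)}|_{M^{\mathsf A}_{\Pi_{(\mathsf A,j)}}}$, $\Pi_{(\mathsf A,j+1)}=\Pi_{(\mathsf B,j)}|_{M^{\mathsf B}_{\Pi_{(\mathsf B,j)}}}$. $C^{\mathsf A,z}_\Pi=\sum_{j=0}^z M^{\mathsf A}_{\Pi_{(\mathsf A,j)}}\prod_{t<j}(1-M^{\mathsf A}_{\Pi_{(\mathsf A,t)}})$ and $C^{\mathsf B,z}_\Pi=\sum_{j=0}^z M^{\mathsf B}_{\Pi_{(\mathsf B,j)}}\prod_{t<j}(1-M^{\mathsf B}_{\Pi_{(\mathsf B,t)}})$. $\mathrm{Best}_{\mathsf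 A}(\Pi')$ ($\mathrm{Best}_{\mathsf B}(\Pi')$) is the maximal probability of output $1$ (resp. $0$) achievable by a deterministic attacker for $\mathsf A$ (resp. $\mathsf B$) that only sends messages with positive probability in $\Pi'$, against the honest other party; $\mathrm{Best}_{\mathsf A}(\perp)=\mathrm{Best}_{\mathsf B}(\perp)=1$. *)

(* Defs.v *)
From HB Require Import structures.
From mathcomp Require Import all_boot all_order all_algebra.
From mathcomp Require Import boolp classical_sets reals.
Set Implicit Arguments. Unset Strict Implicit. Unset Printing Implicit Defensive.
Import Order.TTheory GRing.Theory Num.Theory.
Local Open Scope ring_scope.

(* Nodes of the complete binary tree are bit sequences (root = [::]);
   the children of u are u ++ [:: b]; leaves of an m-round protocol are the
   sequences of size m.  Party A is encoded by [true], party B by [false]. *)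
Record proto (R : Type) := Proto {
  pm : nat;                         (* number of rounds m *)
  pctrl : seq bool -> bool;         (* pctrl u = true iff A controls node u *)
  pe : seq bool -> bool -> R;       (* pe u b = e_Pi(u, ub) *)
  pchi : seq bool -> bool           (* output chi_Pi on leaves *)
}.

Section Protocols.
Variable R : realType.
Implicit Types (P : proto R) (M : seq bool -> R).

Definition is_protocol P : Prop :=
  forall u : seq bool, (size u < pm P)%N ->
    0 <= pe P u false /\ 0 <= pe P u true /\ pe P u false + pe P u true = 1.

Definition rsub P (u : seq bool) : proto R :=
  Proto (pm P - size u) (fun w => pctrl P (u ++ w)) (fun w => pe P (u ++ w))
        (fun w => pchi P (u ++ w)).

Fixpoint visit_rec (f : seq bool -> bool -> R) (pre u : seq bool) : R :=
  match u with
  | [::] => 1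
  | b :: w => f pre b * visit_rec f (rcons pre b) w
  end.
Definition visit P (u : seq bool) : R := visit_rec (pe P) [::] u.

(* subprotocol Pi_u, or bot (None) if v_Pi(u) = 0 *)
Definition sub P (u : seq bool) : option (proto R) :=
  if visit P u == 0 then None else Some (rsub P u).

Definition Exp P M : R := \sum_(l : (pm P).-tuple bool) visit P l * M l.
Definition ExpO (oP : option (proto R)) M : R :=
  if oP is Some P then Exp P M else 0.
Definition ExpU P M (u : seq bool) : R := ExpO (sub P u) (fun w => M (u ++ w)).

(* dominated measures; p = true gives M^A, p = false gives M^B *)
Definition dom_base (p : bool) (x : bool) : R :=
  if p then (x%:R : R) else 1 - (x%:R : R).

Fixpoint dom_rec (p : bool) (n : nat) P : seq bool -> R :=
  match n with
  | 0 => fun l => dom_base p (pchi P l)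
  | n'.+1 => fun l =>
      let Mc (c : bool) := dom_rec p n' (rsub P [:: c]) in
      let mu (c : bool) :=
        if sub P [:: c] is Some Pc then Exp Pc (Mc c) else 0 in
      match l with
      | [::] => 0
      | b :: l' =>
          let e := pe P [::] b in
          if e == 0 then 0
          else if e == 1 then Mc b l'
          else if (0 < e < 1) && ((pctrl P [::] == p) || (mu b <= mu (~~ b)))
          then Mc b l'
          else mu (~~ b) / mu b * Mc b l'
      end
  end.
Definition dom (p : bool) P : seq bool -> R := dom_rec p (pm P) P.
Definition domO (p : bool) (oP : option (proto R)) : seq bool -> R :=
  if oP is Some P then dom p P else fun _ => 0.

Definition cond_proto P M : proto R :=
  Proto (pm P) (pctrl P)
    (fun u b => if ExpU P M u == 1 then 0
                else pe P u b * (1 - ExpU P M (rcons u b)) / (1 - ExpU P M u))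
    (pchi P).
Definition cond (oP : option (proto R)) M : option (proto R) :=
  if oP is Some P then (if Exp P M < 1 then Some (cond_proto P M) else None)
  else None.

Definition stepB (oA : option (proto R)) := cond oA (domO true oA).
Definition stepA (oB : option (proto R)) := cond oB (domO false oB).
Definition PiA P (j : nat) : option (proto R) :=
  iter j (fun o => stepA (stepB o)) (Some P).
Definition PiB P (j : nat) : option (proto R) := stepB (PiA P j).

Definition CA P (z : nat) : seq bool -> R := fun l =>
  \sum_(j < z.+1) domO true (PiA P j) l *
                  \prod_(t < j) (1 - domO true (PiA P t) l).
Definition CB P (z : nat) : seq bool -> R := fun l =>
  \sum_(j < z.+1) domO false (PiB P j) l *
                  \prod_(t < j) (1 - domO false (PiB P t) l).

(* deterministic attackers: a strategy gives the attacker's message at every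
   node (history); [attack_val p] = probability of output 1 (p = A) resp.
   output 0 (p = B) against the honest other party; [attack_ok] = the
   attacker only sends messages of positive probability (on every node
   reached with positive probability during the attack). *)
Fixpoint attack_val (p : bool) (n : nat) P (f : seq bool -> bool) : R :=
  match n with
  | 0 => (((pchi P [::]) == p)%:R : R)
  | n'.+1 =>
      if pctrl P [::] == p then
        attack_val p n' (rsub P [:: f [::]]) (fun w => f (f [::] :: w))
      else \sum_(b : bool) pe P [::] b *
             attack_val p n' (rsub P [:: b]) (fun w => f (b :: w))
  end.
Fixpoint attack_ok (p : bool) (n : nat) P (f : seq bool -> bool) : Prop :=
  match n with
  | 0 => True
  | n'.+1 =>
      if pctrl P [::] == p then
        0 < pe P [::] (f [::]) /\
        attack_ok p n' (rsub P [:: f [::]]) (fun w => f (f [::] :: w))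
      else forall b : bool, 0 < pe P [::] b ->
             attack_ok p n' (rsub P [:: b]) (fun w => f (b :: w))
  end.

(* Best_A (p = true), Best_B (p = false); Best(bot) = 1 *)
Definition Best (p : bool) (oP : option (proto R)) : R :=
  if oP is Some P then
    sup [set x : R | exists f, attack_ok p (pm P) P f /\
                               x = attack_val p (pm P) P f]
  else 1.

Definition alpha P (j : nat) : R := 1 - Best false (PiA P j).
Definition beta P (j : nat) : R := 1 - Best true (PiB P j).

End Protocols.

(* Main.v *)
Require Import Defs.
From HB Require Import structures.
From mathcomp Require Import all_boot all_order all_algebra.
From mathcomp Require Import boolp classical_sets reals.
From mathcomp Require Import ring lra.
From Stdlib Require Import Lia.
From mathcomp Require Import zify.
Set Implicit Arguments. Unset Strict Implicit. Unset Printing Implicit Defensive.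
Import Order.TTheory GRing.Theory Num.Theory.
Local Open Scope ring_scope.


Section S.
Variable R : realType.
Implicit Types (P Q : proto R) (M : seq bool -> R).

Lemma visit_rec_shift (f : seq bool -> bool -> R) pre q t :
  visit_rec f (pre ++ q) t = visit_rec (fun w => f (pre ++ w)) q t.
Proof.
elim: t q => [|b t IH] q //=.
by rewrite -IH rcons_cat.
Qed.

Lemma visit_rec_cat (f : seq bool -> bool -> R) pre u w :
  visit_rec f pre (u ++ w) = visit_rec f pre u * visit_rec f (pre ++ u) w.
Proof.
elim: u pre => [|b u IH] pre /=; first by rewrite mul1r cats0.
by rewrite IH mulrA cat_rcons.
Qed.

Lemma visit_cat Q u w : visit Q (u ++ w) = visit Q u * visit (rsub Q u) w.
Proof.
by rewrite /visit visit_rec_cat /= -(visit_rec_shift _ u [::]) cats0.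
Qed.

Lemma visit_cons Q b w : visit Q (b :: w) = pe Q [::] b * visit (rsub Q [:: b]) w.
Proof. by rewrite -cat1s visit_cat /visit /= mulr1. Qed.

Lemma visit_rcons Q u b : visit Q (rcons u b) = visit Q u * pe Q u b.
Proof. by rewrite -cats1 visit_cat /visit /= mulr1 cats0. Qed.

Lemma visit_nil Q : visit Q [::] = 1.
Proof. by []. Qed.

Fixpoint Erec (n : nat) Q M : R :=
  match n with
  | 0 => M [::]
  | n'.+1 => \sum_(b : bool) pe Q [::] b * Erec n' (rsub Q [:: b]) (fun w => M (b :: w))
  end.

Lemma sum_tuple_cons n (F : seq bool -> R) :
  \sum_(t : n.+1.-tuple bool) F t = \sum_(b : bool) \sum_(t : n.-tuple bool) F (b :: t).
Proof.
rewrite pair_big /=.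
rewrite (reindex (fun p : bool * n.-tuple bool => [tuple of p.1 :: p.2])) /=.
  by apply: eq_bigr => -[b t].
exists (fun t : n.+1.-tuple bool => (thead t, behead_tuple t)).
  by move=> [b t] _ /=; congr (_, _); apply: val_inj.
move=> t _; apply: val_inj => /=.
by case: t => -[|x s] //= _.
Qed.

Lemma Exp_Erec_gen n Q M :
  \sum_(t : n.-tuple bool) visit Q t * M t = Erec n Q M.
Proof.
elim: n Q M => [|n IH] Q M /=.
  rewrite (big_pred1 [tuple]) ?mul1r //.
  by move=> t; rewrite !inE tuple0 eqxx.
rewrite (@sum_tuple_cons n (fun t => visit Q t * M t)); apply: eq_bigr => b _.
rewrite -IH big_distrr /=; apply: eq_bigr => t _.
by rewrite visit_cons mulrA.
Qed.

Lemma Exp_Erec Q M : Exp Q M = Erec (pm Q) Q M.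
Proof. exact: Exp_Erec_gen. Qed.

End S.
Section S.
Variable R : realType.
Implicit Types (P Q : proto R) (M : seq bool -> R).

Lemma sumb (F : bool -> R) : \sum_(b : bool) F b = F false + F true.
Proof. by rewrite big_bool addrC. Qed.

Definition wprotn n Q := forall u, (size u < n)%N -> visit Q u != 0 ->
  0 <= pe Q u false /\ 0 <= pe Q u true /\ pe Q u false + pe Q u true = 1.

Lemma wprotn_root n Q : wprotn n.+1 Q ->
  0 <= pe Q [::] false /\ 0 <= pe Q [::] true /\ pe Q [::] false + pe Q [::] true = 1.
Proof. by move=> H; apply: H => //; rewrite visit_nil oner_eq0. Qed.

Lemma wprotn_pe n Q b : wprotn n.+1 Q -> 0 <= pe Q [::] b.
Proof. by case/wprotn_root => h0 [h1 _]; case: b. Qed.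

Lemma wprotn_pe1 n Q b : wprotn n.+1 Q -> pe Q [::] (~~ b) = 1 - pe Q [::] b.
Proof. by case/wprotn_root => h0 [h1 h]; case: b => /=; rewrite -h; ring. Qed.

Lemma wprotn_sub n Q b : wprotn n.+1 Q -> pe Q [::] b != 0 -> wprotn n (rsub Q [:: b]).
Proof.
move=> H hb u hu hv; have := H (b :: u) hu.
by rewrite visit_cons mulf_neq0 //; apply.
Qed.

Lemma is_protocol_wprotn P : is_protocol P -> wprotn (pm P) P.
Proof. by move=> H u hu _; apply: H. Qed.

Lemma Erec_ext n Q1 Q2 M1 M2 : (forall w b, pe Q1 w b = pe Q2 w b) ->
  (forall w, M1 w = M2 w) -> Erec n Q1 M1 = Erec n Q2 M2.
Proof.
elim: n Q1 Q2 M1 M2 => [|n IH] Q1 Q2 M1 M2 He HM /=; first exact: HM.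
apply: eq_bigr => b _; rewrite He; congr (_ * _); apply: IH => // w c.
by rewrite /= He.
Qed.

Lemma Erec_scale n Q M k : Erec n Q (fun w => k * M w) = k * Erec n Q M.
Proof.
elim: n Q M => [|n IH] Q M //=.
rewrite big_distrr; apply: eq_bigr => b _.
by rewrite (IH _ (fun w => M (b :: w))) mulrCA.
Qed.

Lemma Erec_ge0 n Q M : wprotn n Q -> (forall w, 0 <= M w) -> 0 <= Erec n Q M.
Proof.
elim: n Q M => [|n IH] Q M hQ hM /=; first exact: hM.
apply: sumr_ge0 => b _.
have [->|hb] := eqVneq (pe Q [::] b) 0; first by rewrite mul0r.
apply: mulr_ge0; first exact: wprotn_pe hQ.
by apply: IH => //; apply: wprotn_sub.
Qed.

Lemma Erec_le1 n Q M : wprotn n Q -> (forall w, M w <= 1) -> Erec n Q M <= 1.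
Proof.
elim: n Q M => [|n IH] Q M hQ hM /=; first exact: hM.
have [h0 [h1 hs]] := wprotn_root hQ.
rewrite sumb -hs lerD //.
  have [->|hb] := eqVneq (pe Q [::] false) 0; first by rewrite mul0r.
  rewrite ler_piMr //; apply: IH => //; exact: wprotn_sub.
have [->|hb] := eqVneq (pe Q [::] true) 0; first by rewrite mul0r.
rewrite ler_piMr //; apply: IH => //; exact: wprotn_sub.
Qed.

Lemma Erec_one n Q : wprotn n Q -> Erec n Q (fun _ => 1) = 1.
Proof.
elim: n Q => [|n IH] Q hQ //=.
have [h0 [h1 hs]] := wprotn_root hQ.
rewrite sumb -[RHS]hs; congr (_ + _).
  have [->|hb] := eqVneq (pe Q [::] false) 0; first by rewrite !mul0r.
  by rewrite IH ?mulr1 //; apply: wprotn_sub.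
have [->|hb] := eqVneq (pe Q [::] true) 0; first by rewrite !mul0r.
by rewrite IH ?mulr1 //; apply: wprotn_sub.
Qed.

End S.
Section S.
Variable R : realType.
Implicit Types (P Q : proto R) (M : seq bool -> R).

Definition muf (p : bool) n Q (c : bool) : R :=
  if sub Q [:: c] is Some Pc then Exp Pc (dom_rec p n (rsub Q [:: c])) else 0.

Definition kf (p : bool) n Q (b : bool) : R :=
  let e := pe Q [::] b in
  if e == 0 then 0 else if e == 1 then 1
  else if (0 < e < 1) && ((pctrl Q [::] == p) || (muf p n Q b <= muf p n Q (~~ b)))
  then 1 else muf p n Q (~~ b) / muf p n Q b.

Lemma dom_cons p n Q b l :
  dom_rec p n.+1 Q (b :: l) = kf p n Q b * dom_rec p n (rsub Q [:: b]) l.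
Proof.
rewrite /= /kf /muf.
by do !case: ifP => _; rewrite ?mul0r ?mul1r.
Qed.

Lemma dom_nil p n Q : dom_rec p n.+1 Q [::] = 0.
Proof. by []. Qed.

Lemma pm_rsub1 Q n c : pm Q = n.+1 -> pm (rsub Q [:: c]) = n.
Proof. by move=> h; rewrite /= h subSS subn0. Qed.

Lemma muf_eq p n Q c : pm Q = n.+1 ->
  muf p n Q c = if pe Q [::] c == 0 then 0
                else Erec n (rsub Q [:: c]) (dom_rec p n (rsub Q [:: c])).
Proof.
move=> hpm; rewrite /muf /sub.
have -> : visit Q [:: c] = pe Q [::] c by rewrite /visit /= mulr1.
by case: eqP => // _; rewrite Exp_Erec (pm_rsub1 c hpm).
Qed.

Fixpoint Vrec (p : bool) n Q : R :=
  match n with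
  | 0 => dom_base R p (pchi Q [::])
  | n'.+1 =>
    let V c := Vrec p n' (rsub Q [:: c]) in
    if pctrl Q [::] == p then pe Q [::] false * V false + pe Q [::] true * V true
    else if pe Q [::] false == 0 then V true
    else if pe Q [::] true == 0 then V false
    else Num.min (V false) (V true)
  end.

Lemma dom_base_01 p x : 0 <= dom_base R p x <= 1.
Proof. by case: p; case: x; rewrite /dom_base /= ?subrr ?subr0 ?ler01 ?lexx. Qed.

Lemma kf_0 p n Q b : pe Q [::] b = 0 -> kf p n Q b = 0.
Proof. by move=> h; rewrite /kf /= h eqxx. Qed.

Lemma kf_1 p n Q b : pe Q [::] b = 1 -> kf p n Q b = 1.
Proof. by move=> h; rewrite /kf /= h eqxx oner_eq0. Qed.

Lemma kf_int p n Q b : 0 < pe Q [::] b < 1 ->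
  kf p n Q b = if (pctrl Q [::] == p) || (muf p n Q b <= muf p n Q (~~ b)) then 1
               else muf p n Q (~~ b) / muf p n Q b.
Proof.
move=> /andP[h0 h1]; rewrite /kf /= h0 h1 /= (gt_eqF h0) (lt_eqF h1) //.
Qed.

Lemma dom_Vrec p n Q : wprotn n Q -> pm Q = n ->
  (forall l, 0 <= dom_rec p n Q l <= 1) /\ Erec n Q (dom_rec p n Q) = Vrec p n Q /\
  0 <= Vrec p n Q <= 1.
Proof.
elim: n Q => [|n IH] Q hQ hpm.
  by split; [move=> l; exact: dom_base_01 | split => //; exact: dom_base_01].
have [h0 [h1 hs]] := wprotn_root hQ.
have IHc c : pe Q [::] c != 0 -> 
   (forall l, 0 <= dom_rec p n (rsub Q [:: c]) l <= 1) /\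
   Erec n (rsub Q [:: c]) (dom_rec p n (rsub Q [:: c])) = Vrec p n (rsub Q [:: c]) /\
   0 <= Vrec p n (rsub Q [:: c]) <= 1.
  by move=> hc; apply: IH; [exact: wprotn_sub | exact: pm_rsub1].
have hmu c : muf p n Q c = if pe Q [::] c == 0 then 0 else Vrec p n (rsub Q [:: c]).
  rewrite muf_eq //; case: eqP => // /eqP hc; by case: (IHc c hc) => _ [-> _].
have mu_ge0 c : 0 <= muf p n Q c.
  rewrite hmu; case: eqP => // /eqP hc; by case: (IHc c hc) => _ [_ /andP[]].
have kf01 b : 0 <= kf p n Q b <= 1.
  rewrite /kf /=; case: eqP => he0; first by rewrite lexx ler01.
  case: eqP => he1; first by rewrite lexx ler01.
  have he : 0 < pe Q [::] b < 1.
    have hb := wprotn_pe b hQ; have hnb := wprotn_pe (~~ b) hQ.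
    have := wprotn_pe1 b hQ; move/eqP: he0 => he0; move/eqP: he1 => he1.
    move=> hn; apply/andP; split; first by rewrite lt_def he0.
    by rewrite lt_def eq_sym he1 /=; move: hnb; rewrite hn subr_ge0.
  rewrite he /=; case: ifP => hc; first by rewrite lexx ler01.
  move/negbT: hc; rewrite negb_or => /andP[_]; rewrite -ltNge => hlt.
  have hb0 : 0 < muf p n Q b by apply: le_lt_trans hlt; exact: mu_ge0.
  rewrite divr_ge0 ?mu_ge0 //= ler_pdivrMr // mul1r; exact: ltW.
have Hterm b : pe Q [::] b * Erec n (rsub Q [:: b]) (fun w => dom_rec p n.+1 Q (b :: w))
    = if pe Q [::] b == 0 then 0 else pe Q [::] b * kf p n Q b * Vrec p n (rsub Q [:: b]).
  case: eqP => [->|/eqP hb]; first by rewrite mul0r.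
  rewrite (@Erec_ext R n _ (rsub Q [:: b]) _ (fun w => kf p n Q b * dom_rec p n (rsub Q [:: b]) w)) //; last first.
    by move=> w; rewrite dom_cons.
  by rewrite Erec_scale mulrA; case: (IHc b hb) => _ [-> _].
have e1E : pe Q [::] true = 1 - pe Q [::] false by rewrite -hs; ring.
split.
  case=> [|b l]; first by rewrite dom_nil lexx ler01.
  rewrite dom_cons; have [hb|hb] := eqVneq (pe Q [::] b) 0.
    by rewrite kf_0 // mul0r lexx ler01.
  have /andP[k0 k1] := kf01 b; have /andP[d0 d1] := (IHc b hb).1 l.
  by rewrite mulr_ge0 //= mulr_ile1.
have hV c : pe Q [::] c != 0 -> 0 <= Vrec p n (rsub Q [:: c]) <= 1 by move=> hc; case: (IHc c hc) => _ [].
rewrite /= sumb !Hterm.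
have [e0z|e0nz] := eqVneq (pe Q [::] false) 0.
  have e1 : pe Q [::] true = 1 by rewrite e1E e0z subr0.
  rewrite e0z e1 oner_eq0 (kf_1 p n e1) !mul1r add0r mul0r.
  by case: ifP => _; rewrite ?add0r; split => //; apply: hV; rewrite e1 oner_eq0.
have [e1z|e1nz] := eqVneq (pe Q [::] true) 0.
  have e0 : pe Q [::] false = 1 by rewrite -hs e1z addr0.
  rewrite e1z e0 (kf_1 p n e0) !mul1r addr0 mul0r addr0.
  by case: ifP => _; split => //; apply: hV; rewrite e0 oner_eq0.
have p0 : 0 < pe Q [::] false by rewrite lt_def e0nz h0.
have p1 : 0 < pe Q [::] true by rewrite lt_def e1nz h1.
have hi0 : 0 < pe Q [::] false < 1 by apply/andP; split; lra.
have hi1 : 0 < pe Q [::] true < 1 by apply/andP; split; lra.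
rewrite (kf_int _ _ hi0) (kf_int _ _ hi1) !hmu (negPf e0nz) (negPf e1nz) /=.
have /andP[v00 v01] := hV false e0nz; have /andP[v10 v11] := hV true e1nz.
set V0 := Vrec p n (rsub Q [:: false]) in v00 v01 *.
set V1 := Vrec p n (rsub Q [:: true]) in v10 v11 *.
case: (pctrl Q [::] == p) => /=.
  rewrite !mulr1; split => //.
  rewrite e1E; apply/andP; split; first by rewrite addr_ge0 // mulr_ge0 // subr_ge0; case/andP: hi0 => _ /ltW.
  nra.
have [h01|h10] := leP V0 V1.
  rewrite mulr1.
  case: leP => h.
    have -> : V1 = V0 by apply/le_anti; rewrite h h01.
    by rewrite mulr1 -mulrDl hs mul1r v00 v01.
  have hV1 : 0 < V1 by apply: le_lt_trans h.
  rewrite -[_ * (V0 / V1) * V1]mulrA divfK ?gt_eqF //.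
  by rewrite -mulrDl hs mul1r v00 v01.
have hV0 : 0 < V0 by apply: le_lt_trans h10.
rewrite (ltW h10) mulr1 -[_ * (V1 / V0) * V0]mulrA divfK ?gt_eqF //.
by rewrite -mulrDl hs mul1r v10 v11.
Qed.
End S.
Section S.
Variable R : realType.
Implicit Types (P Q : proto R) (M : seq bool -> R).

Lemma attack_le1 q n Q f : wprotn n Q -> attack_ok q n Q f -> attack_val q n Q f <= 1.
Proof.
elim: n Q f => [|n IH] Q f hQ /=; first by case: (_ == _).
have [h0 [h1 hs]] := wprotn_root hQ.
case: ifP => _.
  case=> hp hok; apply: IH hok; apply: wprotn_sub => //; exact: lt0r_neq0.
move=> hok; rewrite sumb -hs lerD //.
  have [->|hb] := eqVneq (pe Q [::] false) 0; first by rewrite mul0r.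
  have hp : 0 < pe Q [::] false by rewrite lt_def hb h0.
  by rewrite ler_piMr //; apply: IH (hok _ hp); apply: wprotn_sub.
have [->|hb] := eqVneq (pe Q [::] true) 0; first by rewrite mul0r.
have hp : 0 < pe Q [::] true by rewrite lt_def hb h1.
by rewrite ler_piMr //; apply: IH (hok _ hp); apply: wprotn_sub.
Qed.

Lemma attack_exists p n Q : wprotn n Q -> pm Q = n ->
  exists f, attack_ok (~~ p) n Q f /\ attack_val (~~ p) n Q f = 1 - Vrec p n Q.
Proof.
elim: n Q => [|n IH] Q hQ hpm.
  exists (fun _ => false); split => //=.
  by case: p; case: (pchi Q [::]); rewrite /dom_base /=; lra.
have [h0 [h1 hs]] := wprotn_root hQ.
have IHc c : pe Q [::] c != 0 -> exists g, attack_ok (~~ p) n (rsub Q [:: c]) g /\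
    attack_val (~~ p) n (rsub Q [:: c]) g = 1 - Vrec p n (rsub Q [:: c]).
  by move=> hc; apply: IH; [exact: wprotn_sub | exact: pm_rsub1].
have Hc : pctrl Q [::] == ~~ p = ~~ (pctrl Q [::] == p) by case: (pctrl Q [::]); case: (p).
have [Ep|Ep] := boolP (pctrl Q [::] == p).
  have G c : exists g, pe Q [::] c != 0 -> attack_ok (~~ p) n (rsub Q [:: c]) g /\
      attack_val (~~ p) n (rsub Q [:: c]) g = 1 - Vrec p n (rsub Q [:: c]).
    have [hc|hc] := eqVneq (pe Q [::] c) 0; first by exists (fun _ => false).
    by have [g hg] := IHc c hc; exists g.
  have [g0 hg0] := G false; have [g1 hg1] := G true.
  exists (fun w => match w with [::] => false | b :: w' => if b then g1 w' else g0 w' end).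
  rewrite /= Hc Ep /=; split.
    case=> hp; [apply: (hg1 (lt0r_neq0 hp)).1 | apply: (hg0 (lt0r_neq0 hp)).1].
  rewrite sumb -[in RHS]hs /=.
  have [e0|e0] := eqVneq (pe Q [::] false) 0.
    have e1 : pe Q [::] true = 1 by rewrite -hs e0 add0r.
    rewrite e0 !mul0r !add0r (hg1 ltac:(by rewrite e1 oner_eq0)).2; ring.
  have [e1|e1] := eqVneq (pe Q [::] true) 0.
    rewrite e1 !mul0r !addr0 (hg0 _).2 //; by ring.
  rewrite (hg0 e0).2 (hg1 e1).2; ring.
pose c := if pe Q [::] false == 0 then true else if pe Q [::] true == 0 then false
  else ~~ (Vrec p n (rsub Q [:: false]) <= Vrec p n (rsub Q [:: true])).
have hcV : Vrec p n.+1 Q = Vrec p n (rsub Q [:: c]).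
  rewrite /= (negPf Ep) /c.
  case: eqP => // _; case: eqP => // _.
  by case: leP.
have hc0 : pe Q [::] c != 0.
  rewrite /c; have [e0|e0] := eqVneq (pe Q [::] false) 0.
    by rewrite (_ : pe Q [::] true = 1) ?oner_eq0 // -hs e0 add0r.
  have [e1|e1] := eqVneq (pe Q [::] true) 0.
    by rewrite (_ : pe Q [::] false = 1) ?oner_eq0 // -hs e1 addr0.
  by case: (_ <= _).
have [g [hg1 hg2]] := IHc c hc0.
exists (fun w => match w with [::] => c | b :: w' => g w' end).
rewrite hcV /= Hc (negPf Ep) /=; split => //.
by rewrite lt_def hc0 (wprotn_pe c hQ).
Qed.

Lemma Best_ge p Q : wprotn (pm Q) Q -> 1 - Exp Q (dom p Q) <= Best (~~ p) (Some Q).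
Proof.
move=> hQ.
have [_ [hE _]] := dom_Vrec p hQ (erefl _).
rewrite Exp_Erec /dom hE.
have [f [hok hv]] := attack_exists p hQ (erefl _).
rewrite -hv /Best; apply: ub_le_sup; last by exists f.
exists 1 => x [g [hg ->]]; exact: attack_le1 hg.
Qed.

End S.
Section S.
Variable R : realType.
Implicit Types (P Q : proto R) (M : seq bool -> R).

Definition cB p n Q : bool :=
  if pe Q [::] false == 0 then true else if pe Q [::] true == 0 then false
  else ~~ (Vrec p n (rsub Q [:: false]) <= Vrec p n (rsub Q [:: true])).

Lemma cB_pe p n Q : wprotn n.+1 Q -> pe Q [::] (cB p n Q) != 0.
Proof.
move=> hQ; have [h0 [h1 hs]] := wprotn_root hQ.
rewrite /cB; have [e0|e0] := eqVneq (pe Q [::] false) 0.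
  by rewrite (_ : pe Q [::] true = 1) ?oner_eq0 // -hs e0 add0r.
have [e1|e1] := eqVneq (pe Q [::] true) 0.
  by rewrite (_ : pe Q [::] false = 1) ?oner_eq0 // -hs e1 addr0.
by case: (_ <= _).
Qed.

Lemma cB_V p n Q : pctrl Q [::] != p -> Vrec p n.+1 Q = Vrec p n (rsub Q [:: cB p n Q]).
Proof.
move=> Ep; rewrite /= (negPf Ep) /cB.
case: eqP => // _; case: eqP => // _.
by case: leP.
Qed.

Lemma mufV p n Q c : wprotn n.+1 Q -> pm Q = n.+1 ->
  muf p n Q c = if pe Q [::] c == 0 then 0 else Vrec p n (rsub Q [:: c]).
Proof.
move=> hQ hpm; rewrite muf_eq //; case: eqP => // /eqP hc.
have [_ [-> _]] := dom_Vrec p (wprotn_sub hQ hc) (pm_rsub1 c hpm); done.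
Qed.

Lemma Vrec_ge0 p n Q : wprotn n Q -> 0 <= Vrec p n Q.
Proof.
elim: n Q p => [|n IH] Q p hQ /=; first by case/andP: (dom_base_01 R p (pchi Q [::])).
have [h0 [h1 hs]] := wprotn_root hQ.
have hV c : pe Q [::] c != 0 -> 0 <= Vrec p n (rsub Q [:: c]).
  by move=> hc; apply: IH; apply: wprotn_sub.
case: ifP => _.
  apply: addr_ge0.
    have [->|e] := eqVneq (pe Q [::] false) 0; [by rewrite mul0r | by rewrite mulr_ge0 // hV].
  have [->|e] := eqVneq (pe Q [::] true) 0; [by rewrite mul0r | by rewrite mulr_ge0 // hV].
have [e0|e0] := eqVneq (pe Q [::] false) 0.
  by apply: hV; rewrite (_ : pe Q [::] true = 1) ?oner_eq0 // -hs e0 add0r.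
have [e1|e1] := eqVneq (pe Q [::] true) 0; first exact: hV.
by rewrite le_min !hV.
Qed.

Lemma kf_cB p n Q : wprotn n.+1 Q -> pm Q = n.+1 -> pctrl Q [::] != p ->
  kf p n Q (cB p n Q) = 1.
Proof.
move=> hQ hpm Ep; have [h0 [h1 hs]] := wprotn_root hQ.
have hc := cB_pe p hQ.
have [e1|e1] := eqVneq (pe Q [::] (cB p n Q)) 1; first exact: kf_1.
have hi : 0 < pe Q [::] (cB p n Q) < 1.
  have := wprotn_pe (cB p n Q) hQ; have := wprotn_pe (~~ cB p n Q) hQ.
  rewrite (wprotn_pe1 (cB p n Q) hQ) => ha hb.
  by rewrite lt_def hc hb /= lt_neqAle e1 /= -subr_ge0.
rewrite kf_int // (negPf Ep) /= !mufV //.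
move: hi hc; rewrite /cB.
have [e0|e0] := eqVneq (pe Q [::] false) 0.
  by rewrite (_ : pe Q [::] true = 1) ?ltxx ?andbF // -hs e0 add0r.
have [e1'|e1'] := eqVneq (pe Q [::] true) 0.
  by rewrite (_ : pe Q [::] false = 1) ?ltxx ?andbF // -hs e1' addr0.
have [h|h] := leP (Vrec p n (rsub Q [:: false])) (Vrec p n (rsub Q [:: true])) => _ _ /=; rewrite (negPf e0) (negPf e1') /=; first by rewrite h.
by rewrite ltW.
Qed.

Lemma Vrec_pos_leaf p n Q : wprotn n Q -> pm Q = n -> 0 < Vrec p n Q ->
  exists l, size l = n /\ visit Q l != 0 /\ dom_rec p n Q l = 1.
Proof.
elim: n Q => [|n IH] Q hQ hpm.
  rewrite /=.
  move=> h; exists [::]; split => //; split; first by rewrite visit_nil oner_eq0.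
  by move: h; case: p; case: (pchi Q [::]); rewrite /dom_base /= ?subrr ?ltxx // subr0.
have [h0 [h1 hs]] := wprotn_root hQ.
have step c : pe Q [::] c != 0 -> kf p n Q c = 1 -> 0 < Vrec p n (rsub Q [:: c]) ->
    exists l, size l = n.+1 /\ visit Q l != 0 /\ dom_rec p n.+1 Q l = 1.
  move=> hc hk hV.
  have [l [hl [hv hd]]] := IH _ (wprotn_sub hQ hc) (pm_rsub1 c hpm) hV.
  exists (c :: l); split; first by rewrite /= hl.
  by rewrite visit_cons mulf_neq0 // dom_cons hk hd mulr1.
have [Ep|Ep] := boolP (pctrl Q [::] == p).
  move=> hpos; rewrite /= Ep in hpos.
  have kfc c : pe Q [::] c != 0 -> kf p n Q c = 1.
    move=> hc; have [e1|e1] := eqVneq (pe Q [::] c) 1; first exact: kf_1.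
    rewrite kf_int ?Ep //.
    have := wprotn_pe c hQ; have := wprotn_pe (~~ c) hQ.
    rewrite (wprotn_pe1 c hQ) => ha hb.
    by rewrite lt_def hc hb /= lt_neqAle e1 /= -subr_ge0.
  idtac.
  have [e0|e0] := eqVneq (pe Q [::] false) 0.
    have e1 : pe Q [::] true = 1 by rewrite -hs e0 add0r.
    apply: (step true); rewrite ?e1 ?oner_eq0 //; first by apply: kfc; rewrite e1 oner_eq0.
    by move: hpos; rewrite e0 e1 mul0r add0r mul1r.
  have [V0|V0] := ltP 0 (Vrec p n (rsub Q [:: false])).
    exact: (step false e0 (kfc _ e0) V0).
  have hV0' : pe Q [::] false * Vrec p n (rsub Q [:: false]) <= 0 by rewrite mulr_ge0_le0.
  have [e1|e1] := eqVneq (pe Q [::] true) 0.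
    by move: hpos; rewrite e1 mul0r addr0 => /(lt_le_trans)/(_ hV0'); rewrite ltxx.
  apply: (step true e1 (kfc _ e1)).
  have p1 : 0 < pe Q [::] true by rewrite lt_def e1 h1.
  rewrite -(pmulr_rgt0 _ p1).
  by move: hpos; lra.
move=> hpos; rewrite (cB_V _ Ep) in hpos.
exact: step (cB_pe p hQ) (kf_cB hQ hpm Ep) hpos.
Qed.

End S.
Section S.
Variable R : realType.
Implicit Types (P Q : proto R) (M : seq bool -> R).

Lemma Vrec_zero_other p n Q : wprotn n Q -> Vrec p n Q = 0 -> 0 < Vrec (~~ p) n Q.
Proof.
elim: n Q p => [|n IH] Q p hQ.
  by rewrite /=; case: p; case: (pchi Q [::]); rewrite /dom_base /=; lra.
have [h0 [h1 hs]] := wprotn_root hQ.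
have hV q c : pe Q [::] c != 0 -> 0 <= Vrec q n (rsub Q [:: c]).
  by move=> hc; apply: Vrec_ge0; apply: wprotn_sub.
have IHc c : pe Q [::] c != 0 -> Vrec p n (rsub Q [:: c]) = 0 -> 0 < Vrec (~~ p) n (rsub Q [:: c]).
  by move=> hc; apply: IH; apply: wprotn_sub.
have [Ep|Ep] := boolP (pctrl Q [::] == p).
  have Ep' : pctrl Q [::] != ~~ p by move/eqP: Ep => ->; case: (p).
  rewrite (cB_V _ Ep').
  move=> hz; apply: IHc; first exact: cB_pe.
  move: hz; rewrite /= Ep => hz.
  have hc := cB_pe (~~ p) hQ.
  set c := cB (~~ p) n Q in hc *.
  have hpc : 0 < pe Q [::] c by rewrite lt_def hc (wprotn_pe _ hQ).
  have t0 : 0 <= pe Q [::] false * Vrec p n (rsub Q [:: false]).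
    have [->|e] := eqVneq (pe Q [::] false) 0; [by rewrite mul0r | by rewrite mulr_ge0 // hV].
  have t1 : 0 <= pe Q [::] true * Vrec p n (rsub Q [:: true]).
    have [->|e] := eqVneq (pe Q [::] true) 0; [by rewrite mul0r | by rewrite mulr_ge0 // hV].
  have : pe Q [::] c * Vrec p n (rsub Q [:: c]) = 0.
    by case: (c) in hc hpc *; lra.
  by move/eqP; rewrite mulf_eq0 (gt_eqF hpc) /= => /eqP.
rewrite (cB_V _ Ep) => hz.
have hc := cB_pe p hQ; set c := cB p n Q in hc hz.
have Vc := IHc c hc hz.
have Ep' : pctrl Q [::] == ~~ p by move: Ep; case: (pctrl Q [::]); case: (p).
rewrite /= Ep'.
have hpc : 0 < pe Q [::] c by rewrite lt_def hc (wprotn_pe _ hQ).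
have t0 : 0 <= pe Q [::] false * Vrec (~~ p) n (rsub Q [:: false]).
  have [->|e] := eqVneq (pe Q [::] false) 0; [by rewrite mul0r | by rewrite mulr_ge0 // hV].
have t1 : 0 <= pe Q [::] true * Vrec (~~ p) n (rsub Q [:: true]).
  have [->|e] := eqVneq (pe Q [::] true) 0; [by rewrite mul0r | by rewrite mulr_ge0 // hV].
have := mulr_gt0 hpc Vc.
by case: (c); lra.
Qed.

Lemma Vrec_ext p n Q1 Q2 : wprotn n Q1 -> (forall u, pctrl Q1 u = pctrl Q2 u) ->
  (forall u, pchi Q1 u = pchi Q2 u) ->
  (forall u b, (size u < n)%N -> visit Q1 u != 0 -> pe Q1 u b = pe Q2 u b) ->
  Vrec p n Q1 = Vrec p n Q2.
Proof.
elim: n Q1 Q2 => [|n IH] Q1 Q2 hQ hc hx he; first by rewrite /= hx.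
have [h0 [h1 hs]] := wprotn_root hQ.
have E b : pe Q1 [::] b = pe Q2 [::] b by apply: he => //; rewrite visit_nil oner_eq0.
have V b : pe Q1 [::] b != 0 -> Vrec p n (rsub Q1 [:: b]) = Vrec p n (rsub Q2 [:: b]).
  move=> hb; apply: IH => //=; first exact: wprotn_sub.
  move=> u c hu hv; apply: he => //.
  by rewrite visit_cons mulf_neq0.
rewrite /= -!E hc.
have T b : pe Q1 [::] b * Vrec p n (rsub Q1 [:: b]) = pe Q1 [::] b * Vrec p n (rsub Q2 [:: b]).
  by have [->|hb] := eqVneq (pe Q1 [::] b) 0; [rewrite !mul0r | rewrite V].
rewrite !T.
have [e0|e0] := eqVneq (pe Q1 [::] false) 0.
  have [e1|e1] := eqVneq (pe Q1 [::] true) 0; last by rewrite (V true e1).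
  by move: hs; rewrite e0 e1 addr0 => /eqP; rewrite eq_sym oner_eq0.
rewrite (V false e0).
have [e1|e1] := eqVneq (pe Q1 [::] true) 0; first by [].
by rewrite (V true e1).
Qed.

End S.
Section S.
Variable R : realType.
Implicit Types (P Q : proto R) (M : seq bool -> R).

Lemma ExpU_eq n Q M u : pm Q = n ->
  ExpU Q M u = if visit Q u == 0 then 0
               else Erec (n - size u) (rsub Q u) (fun w => M (u ++ w)).
Proof. by move=> hpm; rewrite /ExpU /sub; case: eqP => //= _; rewrite Exp_Erec /= hpm. Qed.

Lemma wprotn_rsub n Q u : wprotn n Q -> visit Q u != 0 -> wprotn (n - size u) (rsub Q u).
Proof.
move=> hQ hu w hw hv; apply: (hQ (u ++ w)); last by rewrite visit_cat mulf_neq0.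
by rewrite size_cat -ltn_subRL.
Qed.

Lemma visit_ge0 n Q u : wprotn n Q -> (size u <= n)%N -> 0 <= visit Q u.
Proof.
move=> hQ; elim/last_ind: u => [|u b IH]; first by rewrite visit_nil ler01.
rewrite size_rcons => hs; rewrite visit_rcons.
have [->|hv] := eqVneq (visit Q u) 0; first by rewrite mul0r.
apply: mulr_ge0; first by apply: IH; exact: ltnW.
by have [h0 [h1 _]] := hQ u hs hv; case: b.
Qed.

Section Cond.
Variables (n : nat) (Q : proto R) (M : seq bool -> R).
Hypotheses (hQ : wprotn n Q) (hpm : pm Q = n) (hM : forall w, 0 <= M w <= 1).

Lemma ExpU_ge0 u : 0 <= ExpU Q M u.
Proof.
rewrite (ExpU_eq _ _ hpm); case: eqP => // /eqP hv.
by apply: Erec_ge0; [exact: wprotn_rsub | move=> w; case/andP: (hM (u ++ w))].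
Qed.

Lemma ExpU_le1 u : ExpU Q M u <= 1.
Proof.
rewrite (ExpU_eq _ _ hpm); case: eqP => [_|/eqP hv]; first exact: ler01.
by apply: Erec_le1; [exact: wprotn_rsub | move=> w; case/andP: (hM (u ++ w))].
Qed.

Lemma ExpU_root : ExpU Q M [::] = Exp Q M.
Proof.
rewrite (ExpU_eq _ _ hpm) visit_nil oner_eq0 subn0 Exp_Erec hpm.
by apply: Erec_ext.
Qed.

Lemma ExpU_leaf u : size u = n -> ExpU Q M u = if visit Q u == 0 then 0 else M u.
Proof. by move=> hs; rewrite (ExpU_eq _ _ hpm) hs subnn /= cats0. Qed.

Lemma ExpU_rec u : (size u < n)%N -> visit Q u != 0 ->
  ExpU Q M u = \sum_(b : bool) pe Q u b * ExpU Q M (rcons u b).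
Proof.
move=> hs hv; rewrite (ExpU_eq _ _ hpm) (negPf hv).
have -> : (n - size u = (n - (size u).+1).+1)%N by rewrite subnSK.
rewrite /=; apply: eq_bigr => b _; rewrite cats0.
have [->|nz] := eqVneq (pe Q u b) 0; first by rewrite !mul0r.
rewrite (ExpU_eq _ _ hpm) visit_rcons mulf_eq0 (negPf hv) (negPf nz) /= size_rcons; congr (_ * _).
by apply: Erec_ext => [w c|w]; rewrite /= cat_rcons.
Qed.

Lemma ExpU_sum1 u : (size u < n)%N -> visit Q u != 0 -> ExpU Q M u = 1 ->
  forall b, pe Q u b * (1 - ExpU Q M (rcons u b)) = 0.
Proof.
move=> hs hv h1 b; have [e0 [e1 es]] := @hQ u hs hv.
have := ExpU_rec hs hv; rewrite h1 sumb => hsum.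
have t0 : 0 <= pe Q u false * (1 - ExpU Q M (rcons u false)).
  by rewrite mulr_ge0 // subr_ge0 ExpU_le1.
have t1 : 0 <= pe Q u true * (1 - ExpU Q M (rcons u true)).
  by rewrite mulr_ge0 // subr_ge0 ExpU_le1.
have : pe Q u false * (1 - ExpU Q M (rcons u false)) + pe Q u true * (1 - ExpU Q M (rcons u true)) = 0.
  by rewrite !mulrBr !mulr1 addrACA es -opprD -hsum subrr.
by case: b; lra.
Qed.

Lemma visit_ExpU_le u : (size u <= n)%N -> visit Q u * ExpU Q M u <= Exp Q M.
Proof.
elim/last_ind: u => [|u b IH]; first by rewrite visit_nil mul1r ExpU_root.
rewrite size_rcons => hs; have IH' := IH (ltnW hs).
rewrite visit_rcons.
have [hv|hv] := eqVneq (visit Q u) 0.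
  by rewrite hv !mul0r -ExpU_root ExpU_ge0.
apply: le_trans IH'; rewrite -mulrA ler_wpM2l //; first exact: (visit_ge0 hQ (ltnW hs)).
have [e0 [e1 es]] := @hQ u hs hv.
rewrite (ExpU_rec hs hv) sumb.
have t0 : 0 <= pe Q u false * ExpU Q M (rcons u false) by rewrite mulr_ge0 ?ExpU_ge0.
have t1 : 0 <= pe Q u true * ExpU Q M (rcons u true) by rewrite mulr_ge0 ?ExpU_ge0.
by case: b; lra.
Qed.

Lemma ExpU_E0 u : Exp Q M = 0 -> (size u <= n)%N -> visit Q u != 0 -> ExpU Q M u = 0.
Proof.
move=> h0 hs hv; have := visit_ExpU_le hs; rewrite h0.
have hp : 0 < visit Q u by rewrite lt_def hv (visit_ge0 hQ hs).
rewrite pmulr_rle0 // => h; apply/eqP; by rewrite eq_le h ExpU_ge0.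
Qed.

Lemma cond_E0_edges u b : Exp Q M = 0 -> (size u < n)%N -> visit Q u != 0 ->
  pe (cond_proto Q M) u b = pe Q u b.
Proof.
move=> h0 hs hv; rewrite /= (ExpU_E0 h0 (ltnW hs) hv) eq_sym oner_eq0 subr0 divr1.
have [->|hb] := eqVneq (pe Q u b) 0; first by rewrite mul0r.
rewrite (ExpU_E0 h0) ?subr0 ?mulr1 ?size_rcons //.
by rewrite visit_rcons mulf_neq0.
Qed.

Hypothesis hE : Exp Q M < 1.

Lemma visit_cond u : (size u <= n)%N ->
  visit (cond_proto Q M) u * (1 - Exp Q M) = visit Q u * (1 - ExpU Q M u).
Proof.
elim/last_ind: u => [|u b IH]; first by rewrite !visit_nil ExpU_root.
rewrite size_rcons => hs; have IH' := IH (ltnW hs).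
rewrite !visit_rcons /=.
have hE0 : 1 - Exp Q M != 0 by rewrite subr_eq0 eq_sym lt_eqF.
have [hv|hv] := eqVneq (visit Q u) 0.
  have : visit (cond_proto Q M) u = 0.
    by apply/eqP; move: IH'; rewrite hv mul0r => /eqP; rewrite mulf_eq0 (negPf hE0) orbF.
  by move=> ->; rewrite hv !mul0r.
case: ifP => [/eqP h1|/negbT h1].
  have : visit (cond_proto Q M) u = 0.
    by apply/eqP; move: IH'; rewrite h1 subrr mulr0 => /eqP; rewrite mulf_eq0 (negPf hE0) orbF.
  by move=> ->; rewrite !mul0r -mulrA ExpU_sum1 // mulr0.
have h1' : 1 - ExpU Q M u != 0 by rewrite subr_eq0 eq_sym.
rewrite mulrAC IH' -!mulrA; congr (_ * _).
by rewrite mulrCA; congr (_ * _); rewrite mulrC divfK.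
Qed.

Lemma visit_cond_leaf l : size l = n ->
  visit (cond_proto Q M) l * (1 - Exp Q M) = visit Q l * (1 - M l).
Proof.
move=> hs; rewrite visit_cond ?hs // ExpU_leaf //.
by case: eqP => [->|]; rewrite ?mul0r.
Qed.

Lemma wprotn_cond : wprotn n (cond_proto Q M).
Proof.
move=> u hs hv'.
have hE0 : 0 < 1 - Exp Q M by rewrite subr_gt0.
have hv : visit Q u != 0.
  apply: contra hv' => /eqP hv; have := visit_cond (ltnW hs).
  by rewrite hv mul0r => /eqP; rewrite mulf_eq0 (gt_eqF hE0) orbF.
have h1 : ExpU Q M u != 1.
  apply: contra hv' => /eqP h1; have := visit_cond (ltnW hs).
  by rewrite h1 subrr mulr0 => /eqP; rewrite mulf_eq0 (gt_eqF hE0) orbF.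
have [e0 [e1 es]] := @hQ u hs hv.
have hp : 0 < 1 - ExpU Q M u by rewrite subr_gt0 lt_neqAle h1 ExpU_le1.
rewrite /= (negPf h1).
have g b : 0 <= 1 - ExpU Q M (rcons u b) by rewrite subr_ge0 ExpU_le1.
split; first by rewrite divr_ge0 ?mulr_ge0 // ltW.
split; first by rewrite divr_ge0 ?mulr_ge0 // ltW.
have hsum : pe Q u false * (1 - ExpU Q M (rcons u false)) + pe Q u true * (1 - ExpU Q M (rcons u true)) = 1 - ExpU Q M u.
  rewrite (ExpU_rec hs hv) sumb !mulrBr !mulr1 -[in RHS]es; ring.
by rewrite -mulrDl hsum divff ?gt_eqF.
Qed.

End Cond.
End S.
Section S.
Variable R : realType.
Implicit Types (P Q : proto R) (M : seq bool -> R).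

Definition good n Q := wprotn n Q /\ pm Q = n.

Lemma dom01 n p Q : good n Q -> forall l, 0 <= dom p Q l <= 1.
Proof. by case=> hQ hpm; rewrite /dom hpm; case: (dom_Vrec p hQ hpm). Qed.

Lemma Exp_dom n p Q : good n Q -> Exp Q (dom p Q) = Vrec p n Q.
Proof.
case=> hQ hpm; rewrite Exp_Erec /dom hpm.
by case: (dom_Vrec p hQ hpm) => _ [].
Qed.

Lemma good_cond n p Q : good n Q -> Exp Q (dom p Q) < 1 ->
  good n (cond_proto Q (dom p Q)).
Proof.
move=> g hE; have [hQ hpm] := g; split => //.
exact: wprotn_cond hQ hpm (dom01 p g) hE.
Qed.

Definition supp n Q := #|[pred t : n.-tuple bool | visit Q t != 0]|.

Lemma supp_cond n Q M : good n Q -> (forall w, 0 <= M w <= 1) -> Exp Q M < 1 ->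
  [pred t : n.-tuple bool | visit (cond_proto Q M) t != 0] \subset
  [pred t : n.-tuple bool | visit Q t != 0].
Proof.
move=> [hQ hpm] hM hE; apply/fintype.subsetP => t; rewrite !inE.
have := visit_cond_leaf hQ hpm hM hE (size_tuple t).
have hE0 : 1 - Exp Q M != 0 by rewrite subr_eq0 eq_sym lt_eqF.
move=> h; apply: contra => /eqP h0; move: h; rewrite h0 mul0r => /eqP.
by rewrite mulf_eq0 (negPf hE0) orbF.
Qed.

Lemma supp_cond_lt n Q M (l : seq bool) : good n Q -> (forall w, 0 <= M w <= 1) ->
  Exp Q M < 1 -> size l = n -> visit Q l != 0 -> M l = 1 ->
  (supp n (cond_proto Q M) < supp n Q)%N.
Proof.
move=> g hM hE hl hv h1; apply: fintype.proper_card; rewrite fintype.properE supp_cond //=.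
have [hQ hpm] := g.
apply/fintype.subsetPn; exists (Tuple (introT eqP hl)); rewrite !inE //=.
have := visit_cond_leaf hQ hpm hM hE hl; rewrite h1 subrr mulr0 => /eqP.
have hE0 : 1 - Exp Q M != 0 by rewrite subr_eq0 eq_sym lt_eqF.
by rewrite mulf_eq0 (negPf hE0) orbF negbK.
Qed.

Lemma supp_pos n Q : good n Q -> (0 < supp n Q)%N.
Proof.
move=> [hQ hpm]; subst n; apply/card_gt0P.
have := Erec_one hQ; rewrite -Exp_Erec /Exp.
have [t ht|] := pickP (fun t : (pm Q).-tuple bool => visit Q t != 0).
  by move=> _; exists t; rewrite inE.
move=> h0; rewrite big1 => [/eqP|t _]; first by rewrite eq_sym oner_eq0.
by move/negbFE/eqP: (h0 t) => ->; rewrite mul0r.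
Qed.

Lemma round_lt n Q : good n Q ->
  let Q' := cond_proto Q (dom true Q) in
  Exp Q (dom true Q) < 1 -> Exp Q' (dom false Q') < 1 ->
  (supp n (cond_proto Q' (dom false Q')) < supp n Q)%N.
Proof.
move=> g Q' ha hb.
have g' : good n Q' := good_cond g ha.
have s1 := subset_leq_card (supp_cond g' (dom01 false g') hb).
have s2 := subset_leq_card (supp_cond g (dom01 true g) ha).
rewrite -/(supp n _) in s1 s2.
have [hQ hpm] := g.
have [apos|a0] := ltP 0 (Exp Q (dom true Q)).
  rewrite (Exp_dom true g) in apos.
  have [l [hl [hv hd]]] := Vrec_pos_leaf hQ hpm apos.
  apply: leq_ltn_trans s1 _; apply: supp_cond_lt g (dom01 true g) ha hl hv _.
  by rewrite /dom hpm.
have a0' : Vrec true n Q = 0.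
  by apply/eqP; rewrite eq_le -(Exp_dom true g) a0 /= (Exp_dom true g) Vrec_ge0.
have bpos := Vrec_zero_other hQ a0'.
have E0 : Exp Q (dom true Q) = 0 by rewrite (Exp_dom true g).
have hVe : Vrec false n Q = Vrec false n Q'.
  apply: (Vrec_ext false hQ) => // u b hu hv.
  by rewrite (cond_E0_edges hQ hpm (dom01 true g) b E0 hu hv).
rewrite /= hVe in bpos.
have [hQ' hpm'] := g'.
have [l [hl [hv hd]]] := Vrec_pos_leaf hQ' hpm' bpos.
apply: leq_trans s2; apply: supp_cond_lt g' (dom01 false g') hb hl hv _.
by rewrite /dom hpm'.
Qed.

End S.
Section S.
Variable R : realType.
Variable P : proto R.
Hypothesis hP : is_protocol P.
Local Notation n := (pm P).

Definition goodO (o : option (proto R)) :=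
  if o is Some Q then good n Q else True.

Lemma goodO_step p o : goodO o -> goodO (cond o (domO p o)).
Proof.
case: o => [Q|] //= g; case: ifP => // h; exact: good_cond.
Qed.

Lemma goodA j : goodO (PiA P j).
Proof.
elim: j => [|j IH] /=; first by split => //; exact: is_protocol_wprotn.
by apply: (goodO_step false); apply: (goodO_step true).
Qed.

Lemma goodB j : goodO (PiB P j).
Proof. exact: (goodO_step true (goodA j)). Qed.

Lemma dom01O p o : goodO o -> forall l, 0 <= domO p o l <= 1.
Proof. case: o => [Q|] g l; first exact: (dom01 p g). by rewrite /= lexx ler01. Qed.

Lemma Exp01O p o : goodO o -> 0 <= ExpO o (domO p o) <= 1.
Proof.
case: o => [Q|] //= g; last by rewrite lexx ler01.
rewrite (Exp_dom p g); have [hQ hpm] := g.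
by case: (dom_Vrec p hQ hpm) => _ [].
Qed.

Lemma Best_geO p o : goodO o -> 1 - ExpO o (domO p o) <= Best (~~ p) o.
Proof.
case: o => [Q|] //= g; last by rewrite subr0.
have [hQ hpm] := g; apply: Best_ge; by rewrite hpm.
Qed.

Definition aA j := ExpO (PiA P j) (domO true (PiA P j)).
Definition bB j := ExpO (PiB P j) (domO false (PiB P j)).
Definition mA j := domO true (PiA P j).
Definition mB j := domO false (PiB P j).
Definition Wt j (l : seq bool) := \prod_(i < j) ((1 - mA i l) * (1 - mB i l)).
Definition Nn j := \prod_(i < j) ((1 - aA i) * (1 - bB i)).

Lemma alpha_le j : alpha P j <= aA j.
Proof. by have := Best_geO true (goodA j); rewrite /alpha /aA; lra. Qed.

Lemma beta_le j : beta P j <= bB j.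
Proof. by have := Best_geO false (goodB j); rewrite /beta /bB; lra. Qed.

Lemma aA01 j : 0 <= aA j <= 1. Proof. exact: (Exp01O true (goodA j)). Qed.
Lemma bB01 j : 0 <= bB j <= 1. Proof. exact: (Exp01O false (goodB j)). Qed.
Lemma mA01 j l : 0 <= mA j l <= 1. Proof. exact: (dom01O true (goodA j)). Qed.
Lemma mB01 j l : 0 <= mB j l <= 1. Proof. exact: (dom01O false (goodB j)). Qed.

Lemma seq_inv j : (forall t, (t < j)%N -> aA t < 1 /\ bB t < 1) ->
  exists Q, PiA P j = Some Q /\ good n Q /\ (supp n Q + j <= supp n P)%N /\
    forall l : n.-tuple bool, visit P l * Wt j l = Nn j * visit Q l.
Proof.
elim: j => [|j IH] H.
  exists P; split => //; split; first by split => //; exact: is_protocol_wprotn.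
  by rewrite addn0; split => // l; rewrite /Wt /Nn !big_ord0 mulr1 mul1r.
have [Q [hA [g [hs hW]]]] := IH (fun t ht => H t (ltnW ht)).
have [ha hb] := H j (ltnSn j).
have hB : PiB P j = Some (cond_proto Q (dom true Q)).
  by rewrite /PiB hA /stepB /=; move: ha; rewrite /aA hA /= => ->.
set Q' := cond_proto Q (dom true Q) in hB.
have ha' : Exp Q (dom true Q) < 1 by move: ha; rewrite /aA hA.
have hb' : Exp Q' (dom false Q') < 1 by move: hb; rewrite /bB hB.
have g' : good n Q' := good_cond g ha'.
exists (cond_proto Q' (dom false Q')); split.
  by rewrite /PiA iterS -/(PiA P j) -/(PiB P j) hB /stepA /= hb'.
split; first exact: good_cond.
split; first by have := round_lt g ha' hb'; rewrite -/Q'; lia.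
move=> l; rewrite /Wt /Nn !big_ord_recr /= -/(Wt j l) -/(Nn j).
have [hQ hpm] := g; have [hQ' hpm'] := g'.
have e1 : visit Q' l * (1 - aA j) = visit Q l * (1 - mA j l).
  rewrite /aA /mA hA; exact: (visit_cond_leaf hQ hpm (dom01 true g) ha' (size_tuple l)).
have e2 : visit (cond_proto Q' (dom false Q')) l * (1 - bB j) = visit Q' l * (1 - mB j l).
  rewrite /bB /mB hB; exact: (visit_cond_leaf hQ' hpm' (dom01 false g') hb' (size_tuple l)).
symmetry.
transitivity (Nn j * (1 - aA j) * (visit (cond_proto Q' (dom false Q')) l * (1 - bB j))); first by ring.
rewrite e2.
transitivity (Nn j * (visit Q' l * (1 - aA j)) * (1 - mB j l)); first by ring.
rewrite e1.
transitivity ((Nn j * visit Q l) * ((1 - mA j l) * (1 - mB j l))); first by ring.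
rewrite -hW; ring.
Qed.

End S.
Section S.
Variable R : realType.
Variable P : proto R.
Hypothesis hP : is_protocol P.
Local Notation n := (pm P).

Lemma Exp_pm (Q : proto R) M : pm Q = n -> Exp Q M = \sum_(t : n.-tuple bool) visit Q t * M t.
Proof. by move=> h; rewrite Exp_Erec h Exp_Erec_gen. Qed.

Lemma term : exists K, 1 <= aA P K \/ 1 <= bB P K.
Proof.
have [//|H] := pselect (exists K, 1 <= aA P K \/ 1 <= bB P K).
exfalso.
have H' t : (t < (supp n P).+1)%N -> aA P t < 1 /\ bB P t < 1.
  move=> _; split; rewrite ltNge; apply/negP => h; apply: H; exists t; by [left|right].
have [Q [_ [_ [hs _]]]] := seq_inv hP H'.
lia.
Qed.

Lemma prod01 j (f : nat -> R) : (forall i, 0 <= f i <= 1) ->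
  0 <= \prod_(i < j) f i <= 1.
Proof.
move=> hf; elim: j => [|j IH]; first by rewrite big_ord0 ler01 lexx.
rewrite big_ord_recr /=; case/andP: IH => h0 h1; case/andP: (hf j) => f0 f1.
by rewrite mulr_ge0 //= mulr_ile1.
Qed.

Lemma visitP_ge0 (l : n.-tuple bool) : 0 <= visit P l.
Proof. by apply: (visit_ge0 (is_protocol_wprotn hP)); rewrite size_tuple. Qed.

Lemma CA_ge z : (forall t, (t < z)%N -> aA P t < 1 /\ bB P t < 1) ->
  \sum_(j < z.+1) Nn P j * aA P j <= Exp P (CA P z).
Proof.
move=> H.
have step (j : 'I_z.+1) : Nn P j * aA P j =
    \sum_(l : n.-tuple bool) visit P l * (mA P j l * Wt P j l).
  have [Q [hA [g [_ hW]]]] := @seq_inv R P hP j (fun t ht => H t (leq_trans ht (ltn_ord j))).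
  rewrite /aA hA /= (Exp_pm _ g.2) big_distrr /=; apply: eq_bigr => l _.
  transitivity ((visit P l * Wt P j l) * dom true Q l); first by rewrite (hW l); ring.
  rewrite /mA hA; change (domO true (Some Q) l) with (dom true Q l); ring.
rewrite (eq_bigr _ (fun j _ => step j)) exchange_big /= /Exp; apply: ler_sum => l _.
rewrite /CA big_distrr /=; apply: ler_sum => j _.
apply: ler_wpM2l; first exact: visitP_ge0.
rewrite /Wt /mA big_split /=; apply: ler_wpM2l; first by case/andP: (mA01 hP j l).
have /andP[a0 a1] := @prod01 j (fun i => 1 - domO true (PiA P i) l)
  (fun i => ltac:(by have /andP[u v] := mA01 hP i l; rewrite /mA in u v; apply/andP; split; lra)).
have /andP[b0 b1] := @prod01 j (fun i => 1 - mB P i l)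
  (fun i => ltac:(by have /andP[u v] := mB01 hP i l; apply/andP; split; lra)).
by rewrite ler_piMr.
Qed.


End S.

Section S2.
Variable R : realType.
Variable P : proto R.
Hypothesis hP : is_protocol P.
Local Notation n := (pm P).

Lemma seq_invB j : (forall t, (t < j)%N -> aA P t < 1 /\ bB P t < 1) -> aA P j < 1 ->
  exists Q', PiB P j = Some Q' /\ good n Q' /\
    forall l : n.-tuple bool, visit P l * Wt P j l * (1 - mA P j l) = Nn P j * (1 - aA P j) * visit Q' l.
Proof.
move=> H ha.
have [Q [hA [g [_ hW]]]] := seq_inv hP H.
have ha' : Exp Q (dom true Q) < 1 by move: ha; rewrite /aA hA.
exists (cond_proto Q (dom true Q)); split.
  by rewrite /PiB hA /stepB /= ha'.
split; first exact: good_cond.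
move=> l; have [hQ hpm] := g.
have e1 : visit (cond_proto Q (dom true Q)) l * (1 - aA P j) = visit Q l * (1 - mA P j l).
  rewrite /aA /mA hA; exact: (visit_cond_leaf hQ hpm (dom01 true g) ha' (size_tuple l)).
transitivity (Nn P j * (visit (cond_proto Q (dom true Q)) l * (1 - aA P j))); last by ring.
by rewrite e1 (hW l); ring.
Qed.

Lemma CB_ge z : (forall t, (t < z)%N -> aA P t < 1 /\ bB P t < 1) -> aA P z < 1 ->
  \sum_(j < z.+1) Nn P j * (1 - aA P j) * bB P j <= Exp P (CB P z).
Proof.
move=> H hz.
have step (j : 'I_z.+1) : Nn P j * (1 - aA P j) * bB P j =
    \sum_(l : n.-tuple bool) visit P l * (mB P j l * (Wt P j l * (1 - mA P j l))).
  have H' : forall t, (t < j)%N -> aA P t < 1 /\ bB P t < 1.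
    by move=> t ht; apply: H; exact: (leq_trans ht (ltn_ord j)).
  have ha : aA P j < 1.
    have := ltn_ord j; rewrite ltnS leq_eqVlt => /orP[/eqP ->//|hj].
    exact: (H _ hj).1.
  have [Q' [hB [g hW]]] := seq_invB H' ha.
  rewrite /bB hB /= (Exp_pm _ g.2) big_distrr /=; apply: eq_bigr => l _.
  transitivity ((visit P l * Wt P j l * (1 - mA P j l)) * dom false Q' l); first by rewrite (hW l); ring.
  by rewrite /mB hB; change (domO false (Some Q') l) with (dom false Q' l); ring.
rewrite (eq_bigr _ (fun j _ => step j)) exchange_big /= /Exp; apply: ler_sum => l _.
rewrite /CB big_distrr /=; apply: ler_sum => j _.
apply: ler_wpM2l; first exact: visitP_ge0.
rewrite /Wt /mB big_split /=; apply: ler_wpM2l; first by case/andP: (mB01 hP j l).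
have /andP[a0 a1] := @prod01 R j (fun i => 1 - mA P i l)
  (fun i => ltac:(by have /andP[u v] := mA01 hP i l; apply/andP; split; lra)).
have /andP[b0 b1] := @prod01 R j (fun i => 1 - domO false (PiB P i) l)
  (fun i => ltac:(by have /andP[u v] := mB01 hP i l; rewrite /mB in u v; apply/andP; split; lra)).
have /andP[c0 c1] := mA01 hP j l.
set A := \prod_(i < j) (1 - mA P i l) in a0 a1 *.
set B := \prod_(i < j) (1 - domO false (PiB P i) l) in b0 b1 *.
have -> : A * B * (1 - mA P j l) = B * (A * (1 - mA P j l)) by ring.
rewrite ler_piMr // ?mulr_ge0 ?mulr_ile1 //; lra.
Qed.

End S2.
Section S.
Variable R : realType.

Lemma sum_mono (f : nat -> R) j k : (forall i, 0 <= f i) -> (j <= k)%N ->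
  \sum_(i < j) f i <= \sum_(i < k) f i.
Proof.
move=> hf hjk; rewrite -!(big_mkord xpredT) [X in _ <= X](big_cat_nat (n:=j)) //=.
by rewrite lerDl sumr_ge0.
Qed.

Lemma term_le_sum (f : nat -> R) t k : (forall i, 0 <= f i) -> (t < k)%N ->
  f t <= \sum_(i < k) f i.
Proof.
move=> hf htk; apply: le_trans (sum_mono hf htk).
by rewrite big_ord_recr /= lerDr sumr_ge0.
Qed.

Variable P : proto R.
Hypothesis hP : is_protocol P.

Lemma a0 j : 0 <= aA P j. Proof. by case/andP: (aA01 hP j). Qed.
Lemma b0 j : 0 <= bB P j. Proof. by case/andP: (bB01 hP j). Qed.

Lemma Nn01 j : 0 <= Nn P j <= 1.
Proof.
apply: (@prod01 R j (fun i => (1 - aA P i) * (1 - bB P i))) => i; have /andP[u v] := aA01 hP i; have /andP[u' v'] := bB01 hP i.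
by rewrite mulr_ge0 ?subr_ge0 //= mulr_ile1 ?subr_ge0 // lerBlDr lerDl.
Qed.

Lemma Nn_ge j : 1 - \sum_(i < j) (aA P i + bB P i) <= Nn P j.
Proof.
elim: j => [|j IH]; first by rewrite big_ord0 /Nn big_ord0 subr0.
rewrite big_ord_recr /Nn big_ord_recr /= -/(Nn P j).
have /andP[u v] := aA01 hP j; have /andP[u' v'] := bB01 hP j.
have /andP[n0 n1] := Nn01 j.
set N := Nn P j in IH n0 n1 *; set a := aA P j in u v *; set b := bB P j in u' v' *.
have h1 : N * a <= a by rewrite ler_piMl.
have h2 : N * b <= b by rewrite ler_piMl.
have h3 : 0 <= N * a * b by rewrite !mulr_ge0.
have -> : N * ((1 - a) * (1 - b)) = N - N * a - N * b + N * a * b by ring.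
lra.
Qed.

Lemma Nn_decr j k : (j <= k)%N -> Nn P k <= Nn P j.
Proof.
move/subnK => <-; elim: (k - j)%N => [|d IH]; first by rewrite add0n.
rewrite addSn /Nn big_ord_recr /= -/(Nn P (d + j)).
have /andP[u v] := aA01 hP (d + j); have /andP[u' v'] := bB01 hP (d + j).
have /andP[n0 n1] := Nn01 (d + j).
apply: le_trans IH; rewrite ler_piMr // mulr_ile1 ?subr_ge0 // lerBlDr lerDl //.
Qed.

End S.

Theorem lemma3p26 (R : realType) (P : proto R) (hP : is_protocol P)
    (c : R) (hc : 0 < c <= 2^-1) :
  exists z : nat,
    (c * (1 - 2 * c) <= Exp P (CA P z) /\ \sum_(j < z) beta P j < c) \/
    (c * (1 - 2 * c) <= Exp P (CB P z) /\ \sum_(j < z.+1) alpha P j < c).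
Proof.
have /andP[c0 c1] := hc.
have c1' : 2 * c <= 1 by rewrite -ler_pdivlMl ?ltr0n // mulrC mul1r.
pose X z := (c <= \sum_(j < z.+1) aA P j) || (c <= \sum_(j < z.+1) bB P j).
have exX : exists z, X z.
  have [K hK] := term hP; exists K; rewrite /X.
  case: hK => h; [apply/orP; left | apply/orP; right];
    (apply: le_trans (term_le_sum _ (ltnSn K)); last by move=> i; rewrite ?a0 ?b0);
    lra.
case: (ex_minnP exX) => z Xz zmin.
have hsm (t : nat) : (t < z)%N -> \sum_(j < t.+1) aA P j < c /\ \sum_(j < t.+1) bB P j < c.
  move=> htz; have : ~~ X t by apply/negP => /zmin; rewrite leqNgt htz.
  by rewrite negb_or -!ltNge => /andP[].
have Sz : \sum_(j < z) aA P j < c /\ \sum_(j < z) bB P j < c.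
  case: z Xz zmin hsm => [|z'] _ _ hsm; first by rewrite !big_ord0.
  exact: hsm.
have small t : (t < z)%N -> aA P t < 1 /\ bB P t < 1.
  move=> htz; split.
    apply: le_lt_trans (term_le_sum (fun i => a0 hP i) htz) _; lra.
  apply: le_lt_trans (term_le_sum (fun i => b0 hP i) htz) _; lra.
have [Sa Sb] := Sz.
have Nz : 1 - 2 * c <= Nn P z.
  apply: le_trans (Nn_ge hP z); rewrite big_split /=; lra.
exists z.
have [hA|hA] := boolP (c <= \sum_(j < z.+1) aA P j).
  left; split.
    apply: le_trans (CA_ge hP small).
    apply: (@le_trans _ _ (\sum_(j < z.+1) Nn P z * aA P j)); last first.
      apply: ler_sum => j _; apply: ler_wpM2r; first exact: a0.
      by apply: (Nn_decr hP); rewrite -ltnS.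
    rewrite -big_distrr /= mulrC; apply: ler_pM; lra.
  apply: le_lt_trans Sb; apply: ler_sum => j _; exact: beta_le.
right; rewrite -ltNge in hA.
have hB : c <= \sum_(j < z.+1) bB P j by move: Xz; rewrite /X leNgt hA.
have haz : aA P z < 1.
  apply: le_lt_trans (term_le_sum (fun i => a0 hP i) (ltnSn z)) _; lra.
split.
  apply: le_trans (CB_ge hP small haz).
  apply: (@le_trans _ _ (\sum_(j < z.+1) (1 - 2 * c) * bB P j)).
    rewrite -big_distrr /= [c * _]mulrC; apply: ler_pM; lra.
  apply: ler_sum => j _; apply: ler_wpM2r; first exact: b0.
  have hj : (j <= z)%N by rewrite -ltnS.
  have h1 := Nn_ge hP j; rewrite big_split /= in h1.
  have h2 : \sum_(i < j.+1) aA P i <= \sum_(i < z.+1) aA P i.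
    by apply: sum_mono => // i; exact: a0.
  have h3 : \sum_(i < j) bB P i <= \sum_(i < z) bB P i.
    by apply: sum_mono => // i; exact: b0.
  rewrite big_ord_recr /= in h2.
  have /andP[n0 n1] := Nn01 hP j; have /andP[u v] := aA01 hP j.
  have h4 : Nn P j * aA P j <= aA P j by rewrite ler_piMl.
  have -> : Nn P j * (1 - aA P j) = Nn P j - Nn P j * aA P j by ring.
  lra.
apply: le_lt_trans hA; apply: ler_sum => j _; exact: alpha_le.
Qed.
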